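(* For every $G^*\in\mathcal{G}^*_{d,c}(n)$, if $\sigma$ is a uniformly random permutation in $S_n$ then \[ \mathbb{E}\left[\lvert\phi(G^{*}_\sigma)\rvert\right] \geq T_c,\qquad T_c=c\cdot\frac{dn}{2}\cdot\frac{d-1}{d+1}.\]
   Context: Fix $0<c<1$, $n,d$ with $dn$ even, and $T_{\max}=\binom d2\frac n3$. $\mathcal{G}^*_{d,c}(n)$ is the set of $d$-regular graphs on nodes $\{1,\dots,n\}$ with at least $c\cdot T_{\max}$ triangles, where at each node the $d$ incident edges carry distinct labels $1,\dots,d$. Configuration ordering: for edges $e=(i_1j_1)$, $f=(i_2j_2)$ with $i_1<j_1$, $i_2<j_2$, $e\prec f$ if $i_1<i_2$, or $i_1=i_2$ and the label of $e$ at $i_1$ is smaller than that of $f$. With $e_1\prec\dots\prec e_{nd/2}$ the edges and $G^*[k]$ the subgraph on $e_1,\dots,e_k$, $\phi(G^* )\in\{0,1\}^{nd/2}$ has $\phi(G^* )(k)=1$ iff $e_k$ lies in a triangle of $G^*[k]$; $\lvert x\rvert=\sum_j x(j)$. $G^*_\sigma$ denotes $G^*$ with node labels permuted by $\sigma\in S_n$ (edge labels kept). *)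

(* Defs.v *)
From HB Require Import structures.
From mathcomp Require Import all_boot all_order all_fingroup all_algebra.
Set Implicit Arguments. Unset Strict Implicit. Unset Printing Implicit Defensive.
Import Order.TTheory GRing.Theory Num.Theory.

(* A graph on nodes 'I_n whose incident edges at each node carry the labels
   0..d-1 (the paper's 1..d shifted by one) is given by its "port" map:
   nbr u k = the neighbour of u reached through the edge labelled k at u. *)
Definition port_graph (n d : nat) := 'I_n -> 'I_d -> 'I_n.

Section Defs.
Variables (n d : nat).
Implicit Type G : port_graph n d.

Definition adj G (u v : 'I_n) : bool := [exists k, G u k == v].

(* simple graph, every node has exactly d incident edges, with distinct labels *)
Definition labeled_regular G : Prop :=
  [/\ forall u, injective (G u),
      forall u k, G u k != u &
      forall u v, adj G u v = adj G v u].

Definition num_triangles G : nat :=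
  #|[set t : {set 'I_n} | (#|t| == 3) &&
      [forall u in t, forall v in t, (u != v) ==> adj G u v]]|.

Definition lab G (u v : 'I_n) : nat :=
  if [pick k | G u k == v] is Some k then nat_of_ord k else 0.

Definition edges G : seq ('I_n * 'I_n) :=
  [seq p : 'I_n * 'I_n <- [seq (i, j) | i : 'I_n <- enum 'I_n, j : 'I_n <- enum 'I_n] | (p.1 < p.2) && adj G p.1 p.2].

Definition conf_le G (e f : 'I_n * 'I_n) : bool :=
  (e.1 < f.1) || ((e.1 == f.1) && (lab G e.1 e.2 <= lab G f.1 f.2)).

Definition sorted_edges G : seq ('I_n * 'I_n) := sort (conf_le G) (edges G).

Definition in_sub (H : seq ('I_n * 'I_n)) (a b : 'I_n) : bool :=
  ((a, b) \in H) || ((b, a) \in H).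

Definition in_triangle (H : seq ('I_n * 'I_n)) (e : 'I_n * 'I_n) : bool :=
  in_sub H e.1 e.2 &&
  [exists w, (w != e.1) && (w != e.2) && in_sub H e.1 w && in_sub H e.2 w].

(* phi(G)(k) for k = 1..nd/2, stored at positions 0..nd/2-1 *)
Definition phi G : seq bool :=
  let s := sorted_edges G in
  mkseq (fun k => if onth s k is Some e then in_triangle (take k.+1 s) e else false)
        (size s).

Definition abs_phi G : nat := count id (phi G).

(* G_sigma: node labels permuted by sigma, edge labels kept *)
Definition perm_graph G (s : 'S_n) : port_graph n d :=
  fun v k => s (G ((s^-1)%g v) k).
End Defs.

(* Main.v *)
Require Import Defs.
From HB Require Import structures.
From mathcomp Require Import all_boot all_order all_fingroup all_algebra.
From mathcomp Require Import reals.
From mathcomp Require Import ring zify.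
Import Order.TTheory GRing.Theory Num.Theory.
Set Implicit Arguments. Unset Strict Implicit. Unset Printing Implicit Defensive.

Section Part1.
Variables (n d : nat) (G : port_graph n d).
Hypothesis Gsym : forall u v, adj G u v = adj G v u.

Definition Qp (e : 'I_n * 'I_n) : bool :=
  [exists w : 'I_n, (w < e.1) && adj G w e.1 && adj G w e.2].

Lemma conf_total : total (conf_le G).
Proof.
move=> e f; rewrite /conf_le.
case: (ltngtP e.1 f.1) => h //=; rewrite ?orbT //.
have -> : e.1 = f.1 by apply: val_inj.
by rewrite eqxx /=; exact: leq_total.
Qed.

Lemma conf_trans : transitive (conf_le G).
Proof.
move=> f e g; rewrite /conf_le => /orP[h1|/andP[/eqP h1 h2]] /orP[h3|/andP[/eqP h3 h4]].
- by rewrite (ltn_trans h1 h3).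
- by rewrite -h3 h1.
- by rewrite h1 h3.
- rewrite h1 h3 in h2 *; rewrite h3 in h4.
  by rewrite eqxx (leq_trans h2 h4) orbT.
Qed.

Lemma conf_refl : reflexive (conf_le G).
Proof. by move=> e; rewrite /conf_le eqxx leqnn orbT. Qed.

Let s := sorted_edges G.

Lemma sorted_s : sorted (conf_le G) s.
Proof. exact: sort_sorted conf_total _. Qed.

Lemma mem_s f : (f \in s) = (f.1 < f.2) && adj G f.1 f.2.
Proof.
rewrite /s /sorted_edges mem_sort /edges mem_filter.
case: f => a b /=; rewrite [_ \in _](_ : _ = true) ?andbT //.
by apply: (allpairs_f pair); rewrite mem_enum.
Qed.

Lemma index_take m f : f \in take m s -> index f s < m.
Proof.
move=> fin; rewrite -(cat_take_drop m s) index_cat fin.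
apply: (leq_trans _ (_ : size (take m s) <= m)).
  by rewrite index_mem.
by rewrite size_take_min geq_minl.
Qed.

Lemma nth_in_take x0 i k : i <= k -> i < size s -> nth x0 s i \in take k.+1 s.
Proof.
move=> ik isz; rewrite -(nth_take x0 (_ : i < k.+1)) //; apply: mem_nth.
by rewrite size_take_min leq_min ltnS ik isz.
Qed.

Lemma le_of_take x0 k f : k < size s -> f \in take k.+1 s -> conf_le G f (nth x0 s k).
Proof.
move=> ksz fin; have fs := mem_take fin.
rewrite -(nth_index x0 fs).
apply: (sorted_leq_nth conf_trans conf_refl x0 sorted_s); rewrite ?inE ?index_mem //.
by rewrite -ltnS index_take.
Qed.

Lemma take_of_lt x0 k f : k < size s -> f \in s -> f.1 < (nth x0 s k).1 -> f \in take k.+1 s.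
Proof.
move=> ksz fs flt; have isz : index f s < size s by rewrite index_mem.
case: (leqP (index f s) k) => ik.
  by rewrite -(nth_index x0 fs); apply: nth_in_take.
have := @sorted_leq_nth _ _ conf_trans conf_refl x0 _ sorted_s k (index f s) ksz isz (ltnW ik).
rewrite (nth_index x0 fs) /conf_le => /orP[h|/andP[/eqP h _]].
  by move: (ltn_trans flt h); rewrite ltnn.
by move: flt; rewrite h ltnn.
Qed.

Lemma in_triangleE k e : onth s k = Some e -> in_triangle (take k.+1 s) e = Qp e.
Proof.
move=> ok; have ksz : k < size s by rewrite -onthTE ok.
have ne : nth e s k = e by apply: onth_nth ok.
have es : e \in s by rewrite -ne mem_nth.
move: (es); rewrite mem_s => /andP[ab adjab].
apply/idP/idP.
- case/andP=> _ /existsP [w /andP[/andP[/andP[wa wb] Haw] Hbw]].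
  have [wlt adjwb] : (w < e.1) /\ adj G w e.2.
    case/orP: Hbw => H; have := le_of_take e ksz H; rewrite ne /conf_le /=.
      move=> /orP[h|/andP[/eqP h _]].
        by move: (ltn_trans ab h); rewrite ltnn.
      by move: ab; rewrite h ltnn.
    have := mem_take H; rewrite mem_s /= => /andP[_ ->].
    move=> /orP[->//|/andP[/eqP h _]].
    by move: wa; rewrite (_ : w = e.1) ?eqxx //; apply: val_inj.
  apply/existsP; exists w; rewrite wlt adjwb andbT /=.
  case/orP: Haw => /mem_take; rewrite mem_s /= => /andP[_ //].
  by rewrite Gsym.
- case/existsP=> w /andP[/andP[wlt Hwa] Hwb].
  apply/andP; split.
    by apply/orP; left; rewrite -surjective_pairing -ne nth_in_take.
  apply/existsP; exists w.
  have wb : w < e.2 := ltn_trans wlt ab.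
  rewrite neq_ltn wlt neq_ltn wb /=.
  apply/andP; split; apply/orP; right.
    by apply: (@take_of_lt e k _ ksz); rewrite ?mem_s /= ?wlt ?Hwa // ne.
  by apply: (@take_of_lt e k _ ksz); rewrite ?mem_s /= ?wb ?Hwb // ne.
Qed.

Lemma count_onth (T : Type) (p : pred T) (l : seq T) :
  count (fun k => if onth l k is Some e then p e else false) (iota 0 (size l)) = count p l.
Proof.
elim: l => //= x l IH; congr (_ + _).
by rewrite -(addn0 1) iotaDl count_map -IH. 
Qed.

Lemma abs_phiE : abs_phi G = \sum_(a : 'I_n) \sum_(b : 'I_n) ((a < b) && adj G a b && Qp (a, b)).
Proof.
rewrite /abs_phi /phi -/s /mkseq count_map.
rewrite (eq_count (a2 := fun k => if onth s k is Some e then Qp e else false)); last first.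
  move=> k /=; case E: (onth s k) => [e|] //; exact: in_triangleE.
rewrite count_onth /s /sorted_edges.
rewrite ((seq.permP (permEl (perm_sort _ _))) _) /edges count_filter -sum1_count.
rewrite big_mkcond big_allpairs big_enum /=; apply: eq_bigr => a _; rewrite big_enum /=.
by apply: eq_bigr => b _ /=; rewrite andbC; case: (_ && _).
Qed.
End Part1.

Lemma sumb_card (T : finType) (P : pred T) : \sum_(i : T) (P i : nat) = #|[set i | P i]|.
Proof. by rewrite -sum1_card [RHS]big_mkcond; apply: eq_bigr => i _; rewrite inE; case: (P i). Qed.

Section Part2.
Variables (n d : nat) (G : port_graph n d).
Hypothesis HG : labeled_regular G.

Lemma Gsym u v : adj G u v = adj G v u.
Proof. by case: HG. Qed.

Lemma adj_irr u : adj G u u = false.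
Proof. by case: HG => _ H _; apply/existsP => -[k /eqP]; apply/eqP/H. Qed.

Definition Cxy (x y : 'I_n) := [set z | adj G z x && adj G z y].

Definition Pp (s : 'S_n) (x y : 'I_n) : bool :=
  (s x < s y) && adj G x y && [exists z, (s z < s x) && (z \in Cxy x y)].

Lemma adj_perm (s : 'S_n) x y : adj (perm_graph G s) (s x) (s y) = adj G x y.
Proof.
rewrite /adj /perm_graph; apply: eq_existsb => k.
by rewrite permK (inj_eq perm_inj).
Qed.

Lemma adj_perm' (s : 'S_n) u v : adj (perm_graph G s) u v = adj G (s^-1 u)%g (s^-1 v)%g.
Proof. by rewrite -(adj_perm s) !permKV. Qed.

Lemma perm_sym (s : 'S_n) u v : adj (perm_graph G s) u v = adj (perm_graph G s) v u.
Proof. by rewrite !adj_perm' Gsym. Qed.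

Lemma Pp_irr s x y : Pp s x y -> x != y.
Proof. by case/andP=> /andP[_ a] _; apply: contraTneq a => ->; rewrite adj_irr. Qed.

Lemma C_neq x y z : z \in Cxy x y -> (z != x) && (z != y).
Proof.
rewrite inE => /andP[a b]; apply/andP; split.
  by apply: contraTneq a => ->; rewrite adj_irr.
by apply: contraTneq b => ->; rewrite adj_irr.
Qed.

Lemma Pp_swap s x y : Pp (tperm x y * s)%g x y = Pp s y x.
Proof.
rewrite /Pp !permM tpermL tpermR Gsym; congr (_ && _).
apply: eq_existsb => z; case Hz: (z \in Cxy x y).
  have := C_neq Hz => /andP[zx zy].
  have Hz2 : z \in Cxy y x by move: Hz; rewrite !inE andbC.
  by rewrite permM tpermD 1?eq_sym // Hz2.
rewrite (_ : z \in Cxy y x = false) ?andbF //.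
by move: Hz; rewrite !inE andbC.
Qed.

Lemma C_sym x y : Cxy x y = Cxy y x.
Proof. by apply/setP => z; rewrite !inE andbC. Qed.

Definition Sxy x y := x |: (y |: Cxy x y).

Definition am x y (s : 'S_n) := [arg min_(u < x in Sxy x y) nat_of_ord (s u)].

Lemma xS x y : x \in Sxy x y. Proof. by rewrite !inE eqxx. Qed.
Lemma yS x y : y \in Sxy x y. Proof. by rewrite !inE eqxx orbT. Qed.
Lemma CS x y z : z \in Cxy x y -> z \in Sxy x y. Proof. by rewrite !inE => ->; rewrite !orbT. Qed.

Lemma am_spec x y s : am x y s \in Sxy x y /\
  forall u, u \in Sxy x y -> u != am x y s -> s (am x y s) < s u.
Proof.
rewrite /am; case: arg_minnP; first exact: xS.
move=> i iS imin; split => // u uS ne.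
rewrite ltn_neqAle imin // andbT.
by apply: contra ne => /eqP/val_inj/perm_inj ->.
Qed.

Lemma amP x y s v : (am x y s == v) = (v \in Sxy x y) && [forall u in Sxy x y, (u != v) ==> (s v < s u)].
Proof.
have [aS amin] := am_spec x y s.
apply/eqP/andP => [<-|[vS /forall_inP H]]; first split => //.
  by apply/forall_inP => u uS; apply/implyP; apply: amin.
apply/eqP; apply: contraT => ne.
have h1 : s (am x y s) < s v by apply: amin => //; rewrite eq_sym.
have := H _ aS; rewrite ne /= => h2.
by move: (ltn_trans h1 h2); rewrite ltnn.
Qed.

Lemma am_tperm x y s v v' : v \in Sxy x y -> v' \in Sxy x y ->
  (am x y (tperm v v' * s)%g == v') = (am x y s == v).
Proof.
move=> vS v'S; rewrite !amP vS v'S /= !permM tpermR.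
have tS u : u \in Sxy x y -> tperm v v' u \in Sxy x y by case: tpermP => // ->.
apply/forall_inP/forall_inP => H u uS; apply/implyP => ne.
- have := H _ (tS _ uS); rewrite permM tpermK.
  by rewrite -[X in _ != X](tpermL v v') (inj_eq perm_inj) ne.
- have := H _ (tS _ uS); rewrite permM.
  by rewrite -[X in _ != X](tpermR v v') (inj_eq perm_inj) ne => /implyP; apply.
Qed.

Definition Nv x y v := \sum_(s : 'S_n) (am x y s == v : nat).

Lemma N_eq x y v v' : v \in Sxy x y -> v' \in Sxy x y -> Nv x y v = Nv x y v'.
Proof.
move=> vS v'S; rewrite /Nv [RHS](reindex_inj (mulgI (tperm v v'))).
by apply: eq_bigr => s _; rewrite am_tperm.
Qed.

Lemma N_total x y : \sum_(v in Sxy x y) Nv x y v = n`!.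
Proof.
rewrite /Nv exchange_big /=.
rewrite (eq_bigr (fun _ => 1)); last first.
  move=> s _; have [aS _] := am_spec x y s.
  rewrite (bigD1 (am x y s)) //= eqxx big1 // => v /andP[_ ne].
  by rewrite eq_sym (negbTE ne).
by rewrite sum1_card card_Sn.
Qed.

Lemma Pp_pt x y s : adj G x y -> (Pp s x y + Pp s y x = (am x y s \in Cxy x y))%N.
Proof.
move=> axy; have [aS amin] := am_spec x y s.
have xy : x != y by apply: contraTneq axy => ->; rewrite adj_irr.
have ayx : adj G y x by rewrite Gsym.
set v := am x y s in aS amin *.
rewrite /Pp axy ayx !andbT [Cxy y x]C_sym.
case Hv: (v \in Cxy x y).
  have /andP[vx vy] := C_neq Hv.
  have sx : s v < s x by apply: amin; rewrite ?xS // eq_sym.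
  have sy : s v < s y by apply: amin; rewrite ?yS // eq_sym.
  have ex1 : [exists z, (s z < s x) && (z \in Cxy x y)] by apply/existsP; exists v; rewrite sx Hv.
  have ex2 : [exists z, (s z < s y) && (z \in Cxy x y)] by apply/existsP; exists v; rewrite sy Hv.
  rewrite ex1 ex2 !andbT.
  case: (ltngtP (s x) (s y)) => // h.
  by move: xy; rewrite (perm_inj (val_inj h)) eqxx.
have : v \in Sxy x y := aS; rewrite /Sxy !in_setU1 Hv orbF => /orP[] /eqP vE.
- have sxy : s x < s y by rewrite -vE; apply: amin; rewrite ?yS // vE eq_sym.
  rewrite sxy ltnNge (ltnW sxy) /=.
  rewrite addn0; apply/eqP; rewrite eqb0; apply/negP => /existsP [z /andP[sz zC]].
  have : s v < s z by apply: amin; [exact: CS|]; have /andP[] := C_neq zC; rewrite vE.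
  by rewrite vE => /(ltn_trans sz); rewrite ltnn.
- have syx : s y < s x by rewrite -vE; apply: amin; rewrite ?xS // vE.
  rewrite syx ltnNge (ltnW syx) /=.
  apply/eqP; rewrite eqb0; apply/negP => /existsP [z /andP[sz zC]].
  have : s v < s z by apply: amin; [exact: CS|]; have /andP[] := C_neq zC; rewrite vE.
  by rewrite vE => /(ltn_trans sz); rewrite ltnn.
Qed.

Lemma card_S x y : adj G x y -> #|Sxy x y| = (#|Cxy x y| + 2)%N.
Proof.
move=> axy; have xy : x != y by apply: contraTneq axy => ->; rewrite adj_irr.
have xC : x \notin Cxy x y by apply/negP => /C_neq; rewrite eqxx.
have yC : y \notin Cxy x y by apply/negP => /C_neq; rewrite eqxx andbF.
rewrite /Sxy cardsU1 cardsU1 in_setU1 (negbTE xy) (negbTE xC) yC /=.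
by rewrite addnA addnC.
Qed.

Lemma deg_bound x y : adj G x y -> (#|Cxy x y| + 1 <= d)%N.
Proof.
move=> axy; case: HG => inj _ _.
set N := [set G x k | k : 'I_d].
have cN : #|N| = d by rewrite card_imset ?card_ord //; apply: inj.
have yN : y \in N by case/existsP: axy => k /eqP <-; apply: imset_f.
have sub : Cxy x y \subset N :\ y.
  apply/subsetP => z zC; have /andP[_ zy] := C_neq zC.
  rewrite in_setD1 zy /=.
  move: zC; rewrite inE => /andP[azx _]; rewrite Gsym in azx.
  by case/existsP: azx => k /eqP <-; apply: imset_f.
rewrite -cN (cardsD1 y N) yN addn1 add1n ltnS.
exact: subset_leq_card.
Qed.

Lemma Pp_count x y : adj G x y ->
  (2 * (#|Cxy x y| + 2) * \sum_(s : 'S_n) Pp s x y = #|Cxy x y| * n`!)%N.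
Proof.
move=> axy.
have hN : ((#|Cxy x y| + 2) * Nv x y x = n`!)%N.
  rewrite -card_S // -sum_nat_const -(N_total x y); apply: eq_bigr => v vS.
  exact: N_eq (xS x y) vS.
have hsym : \sum_(s : 'S_n) Pp s x y = \sum_(s : 'S_n) Pp s y x.
  rewrite (reindex_inj (mulgI (tperm x y))); apply: eq_bigr => s _.
  by rewrite Pp_swap.
have h2 : (2 * \sum_(s : 'S_n) Pp s x y = #|Cxy x y| * Nv x y x)%N.
  rewrite mul2n -addnn {2}hsym -big_split /=.
  rewrite (eq_bigr (fun s => (am x y s \in Cxy x y) : nat)); last by move=> s _; rewrite Pp_pt.
  rewrite -sum_nat_const.
  rewrite (eq_bigr (fun z => Nv x y z)); last by move=> z zC; apply: N_eq (xS x y) (CS zC).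
  rewrite /Nv exchange_big /=; apply: eq_bigr => s _.
  rewrite (big_mkcond (fun z => z \in Cxy x y)) /=.
  case: (boolP (am x y s \in Cxy x y)) => H.
    rewrite (bigD1 (am x y s)) //= H eqxx big1 // => z /negbTE ne.
    by rewrite eq_sym ne; case: (_ \in _).
  rewrite big1 // => z _; case: ifP => // zC; case: eqP => // E; by rewrite E zC in H.
by rewrite mulnAC h2 -mulnA [Nv x y x * _]mulnC hN.
Qed.

Lemma pair_bound x y :
  (adj G x y * #|Cxy x y| * n`! <= 2 * (d + 1) * \sum_(s : 'S_n) Pp s x y)%N.
Proof.
case axy: (adj G x y); last by rewrite mul0n.
rewrite mul1n -Pp_count //.
apply: leq_mul => //; apply: leq_mul => //.
by have := deg_bound axy; rewrite -(leq_add2r 1) -addnA.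
Qed.
End Part2.
Lemma sum_in (T : finType) (A : {set T}) : \sum_(i : T) (i \in A : nat) = #|A|.
Proof. by rewrite sumb_card; apply: eq_card => i; rewrite inE. Qed.

Section Part3.
Variables (n d : nat) (G : port_graph n d).
Definition C3 (x y : 'I_n) := [set z | adj G z x && adj G z y].
Definition cl (t : {set 'I_n}) := [forall u in t, forall v in t, (u != v) ==> adj G u v].
Definition tri (t : {set 'I_n}) := (#|t| == 3) && cl t.
Definition Dist (t : {set 'I_n}) (x y z : 'I_n) : bool := [&& x \in t, y \in (t :\ x) & z \in ((t :\ x) :\ y)].

Lemma clP t u v : cl t -> u \in t -> v \in t -> u != v -> adj G u v.
Proof. by move=> /forall_inP H ut vt; move: (H u ut) => /forall_inP /(_ v vt) /implyP. Qed.

Lemma six (t : {set 'I_n}) : #|t| = 3 -> (\sum_(x : 'I_n) \sum_(y : 'I_n) \sum_(z : 'I_n) (Dist t x y z : nat) = 6)%N.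
Proof.
move=> c3.
rewrite (eq_bigr (fun x => (x \in t) * 2)%N); first by rewrite -big_distrl /= sum_in c3.
move=> x _; case xt: (x \in t); last by rewrite big1 // => y _; rewrite big1 // => z _; rewrite /Dist xt.
rewrite (eq_bigr (fun y => (y \in t :\ x : nat))).
  by rewrite sum_in mul1n; move: c3; rewrite (cardsD1 x) xt; case.
move=> y _; case yt: (y \in t :\ x); last by rewrite big1 // => z _; rewrite /Dist xt yt.
rewrite (eq_bigr (fun z => (z \in t :\ x :\ y : nat))); last by move=> z _; rewrite /Dist xt yt.
rewrite sum_in; move: c3; rewrite (cardsD1 x) xt (cardsD1 y (t :\ x)) yt.
by case.
Qed.

Lemma one x y z : (\sum_(t : {set 'I_n}) (tri t && Dist t x y z : nat) <= adj G x y && (z \in C3 x y))%N.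
Proof.
case: (boolP (adj G x y && (z \in C3 x y))) => H.
  apply: (@leq_trans (\sum_(t : {set 'I_n}) (t == [set x; y; z] : nat))); last first.
    by rewrite (bigD1 [set x; y; z]) //= eqxx big1 // => t /negbTE ->.
  apply: leq_sum => t _; case: (boolP (tri t && Dist t x y z)) => // /andP[/andP[/eqP c3 _]].
  case/and3P => xt; rewrite !in_setD1 => /andP[yx yt] /and3P[zy zx zt].
  suff -> : t == [set x; y; z] by []. rewrite eq_sym eqEcard c3; apply/andP; split.
    by apply/subsetP => u; rewrite !inE => /orP[/orP[/eqP->|/eqP->]|/eqP->].
  have -> : [set x; y; z] = x |: (y |: [set z]) by apply/setP => u; rewrite !inE orbA.
  by rewrite !cardsU1 cards1 !inE negb_or eq_sym yx eq_sym zx eq_sym zy.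
rewrite leqn0 sum_nat_eq0; apply/forallP => t; apply/implyP => _.
rewrite eqb0; apply/negP => /andP[/andP[_ clt]].
case/and3P => xt; rewrite !in_setD1 => /andP[yx yt] /and3P[zy zx zt].
move: H; rewrite inE (clP clt xt yt) 1?eq_sym // (clP clt zt xt zx) (clP clt zt yt zy).
by [].
Qed.

Lemma tri_bound : (6 * num_triangles G <= \sum_(x : 'I_n) \sum_(y : 'I_n) adj G x y * #|C3 x y|)%N.
Proof.
have -> : num_triangles G = \sum_(t : {set 'I_n}) (tri t : nat) by rewrite /num_triangles -sumb_card.
rewrite big_distrr /=.
rewrite (eq_bigr (fun t => \sum_(x : 'I_n) \sum_(y : 'I_n) \sum_(z : 'I_n) (tri t && Dist t x y z : nat))); last first.
  move=> t _; case tt: (tri t).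
    by rewrite muln1 six //; move: tt => /andP[/eqP].
  by rewrite muln0 big1 // => x _; rewrite big1 // => y _; rewrite big1.
rewrite exchange_big; apply: leq_sum => x _.
rewrite exchange_big; apply: leq_sum => y _.
rewrite exchange_big /=.
apply: (@leq_trans (\sum_(z : 'I_n) (adj G x y && (z \in C3 x y) : nat))).
  by apply: leq_sum => z _; apply: one.
case: (adj G x y); last by rewrite mul0n big1.
by rewrite mul1n sum_in.
Qed.
End Part3.

Section Main.
Variables (n d : nat) (G : port_graph n d).
Hypothesis HG : labeled_regular G.

Lemma A_eq (s : 'S_n) : abs_phi (perm_graph G s) = \sum_(x : 'I_n) \sum_(y : 'I_n) (Pp G s x y : nat).
Proof.
rewrite (abs_phiE (perm_sym HG s)) (reindex_inj (@perm_inj _ s)); apply: eq_bigr => x _.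
rewrite (reindex_inj (@perm_inj _ s)); apply: eq_bigr => y _.
rewrite /Pp /Qp /= !(adj_perm G s); congr (nat_of_bool (_ && _)).
apply/existsP/existsP => [[w]|[z]].
  rewrite -{1 2 3}(permKV s w) !(adj_perm G s) => H; exists (s^-1 w)%g.
  by rewrite inE andbA.
by rewrite inE andbA => H; exists (s z); rewrite !(adj_perm G s).
Qed.

Lemma nat_bound : (3 * num_triangles G * n`! <= (d + 1) * \sum_(s : 'S_n) abs_phi (perm_graph G s))%N.
Proof.
rewrite -(@leq_pmul2l 2) // !mulnA -[2 * 3]/6.
apply: (@leq_trans ((\sum_(x : 'I_n) \sum_(y : 'I_n) adj G x y * #|Cxy G x y|) * n`!)).
  by apply: leq_mul => //; exact: tri_bound.
have E : \sum_(s : 'S_n) abs_phi (perm_graph G s) =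
    \sum_(x : 'I_n) \sum_(y : 'I_n) \sum_(s : 'S_n) (Pp G s x y : nat).
  rewrite (eq_bigr _ (fun s _ => A_eq s)) exchange_big /=.
  by apply: eq_bigr => x _; rewrite exchange_big.
rewrite E big_distrl big_distrr /=; apply: leq_sum => x _.
rewrite big_distrl big_distrr /=; apply: leq_sum => y _.
exact: pair_bound.
Qed.
End Main.

Lemma bin2_mul2 d : ('C(d, 2) * 2 + d = d * d)%N.
Proof.
elim: d => // d IH; rewrite binS bin1; nia.
Qed.

Unset Implicit Arguments.

Theorem lemma3 (R : realType) (c : R) (n d : nat) (G : port_graph n d) :
  (0 < c < 1)%R ->
  ~~ odd (d * n) ->
  labeled_regular G ->
  ((num_triangles G)%:R >= c * ('C(d, 2)%:R * n%:R / 3%:R))%R ->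
  ((\sum_(s : 'S_n) (abs_phi (perm_graph G s))%:R) / (n`!)%:R
    >= c * ((d * n)%:R / 2%:R) * ((d%:R - 1) / (d%:R + 1)))%R.
Proof.
move=> _ _ HG hT.
have hn := nat_bound HG.
rewrite -natr_sum.
set X := (\sum_(s : 'S_n) _)%N in hn *.
set T := num_triangles G in hn hT *.
have F0 : (0 < (n`!)%:R :> R)%R by rewrite ltr0n fact_gt0.
have D0 : (0 < d%:R + 1 :> R)%R by rewrite natr1 ltr0n.
have hB : ('C(d, 2)%:R = d%:R * (d%:R - 1) / 2 :> R)%R.
  have h := bin2_mul2 d.
  have : (('C(d, 2) * 2 + d)%:R = (d * d)%:R :> R)%R by rewrite h.
  rewrite natrD !natrM => h'.
  apply: (@mulIf _ 2%:R); first by rewrite pnatr_eq0.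
  rewrite mulrBr mulr1 -mulrA mulVf ?pnatr_eq0 // mulr1.
  by rewrite -h' addrK.
have key : (c * ('C(d, 2)%:R * n%:R) <= 3%:R * T%:R :> R)%R.
  rewrite (mulrA c) ler_pdivrMr ?ltr0n // in hT.
  by rewrite [X in (_ <= X)%R]mulrC.
have hnR : (3%:R * T%:R * (n`!)%:R <= (d%:R + 1) * X%:R :> R)%R.
  by move: hn; rewrite -(ler_nat R) !natrM natrD.
have -> : (c * ((d * n)%:R / 2%:R) * ((d%:R - 1) / (d%:R + 1))
    = c * ('C(d, 2)%:R * n%:R) / (d%:R + 1) :> R)%R.
  rewrite hB natrM.
  field.
  by rewrite gt_eqF.
rewrite ler_pdivlMr // mulrAC ler_pdivrMr //.
apply: (le_trans (ler_wpM2r (ltW F0) key)).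
by rewrite [Y in (_ <= Y)%R]mulrC.
Qed.
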